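(* Fix $(\varepsilon,\delta)\in(0,1)\times(0,\delta_0]$ and suppose $\mathcal R^\ast(\varepsilon,\delta|p_{X_1X_2},p_{K_1K_2})\neq\emptyset$. Then for every $\gamma>0$ there exists $n_0=n_0(\gamma)$ such that for all $n\ge n_0$, $$H(X_i|X_{3-i})\le H(K_i)+\gamma+\zeta_n(\gamma,\varepsilon,\delta),\quad i=1,2,$$ $$H(X_1X_2)\le H(K_1K_2)+\gamma+\zeta_n(\gamma,\varepsilon,\delta).$$
   Context: All logarithms are base 2. $\mathcal X_1,\mathcal X_2$ are finite fields. $(X_1,X_2)$ has joint pmf $p_{X_1X_2}$ on $\mathcal X_1\times\mathcal X_2$ and $(K_1,K_2)$ has joint pmf $p_{K_1K_2}$ on $\mathcal X_1\times\mathcal X_2$. For block length $n$, $(\mathbf X_1,\mathbf X_2)$ is i.i.d. with law $p^n_{X_1X_2}$ (source), $(\mathbf K_1,\mathbf K_2)$ is i.i.d. with law $p^n_{K_1K_2}$ (keys), and the keys are independent of the sources. A distributed source encryption system at block length $n$ consists of finite sets $\mathcal C_i^{(n)}$, encryption maps $\Phi_i^{(n)}:\mathcal X_i^n\times\mathcal X_i^n\to\mathcal C_i^{(n)}$ (key, plaintext) and a decryption map $\Psi^{(n)}:\mathcal X_1^n\times\mathcal X_2^n\times\mathcal C_1^{(n)}\times\mathcal C_2^{(n)}\to\mathcal X_1^n\times\mathcal X_2^n$, such that there exist maps $\phi_i^{(n)}:\mathcal X_i^n\to\mathcal M_i^{(n)}$ (finite $\mathcal M_i^{(n)}$) and $\psi^{(n)}$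 with $\Psi^{(n)}(\mathbf k_1,\mathbf k_2,\Phi_1^{(n)}(\mathbf k_1,\mathbf x_1),\Phi_2^{(n)}(\mathbf k_2,\mathbf x_2))=\psi^{(n)}(\phi_1^{(n)}(\mathbf x_1),\phi_2^{(n)}(\mathbf x_2))$ for all keys and plaintexts. Ciphertexts: $C_i^{(n)}=\Phi_i^{(n)}(\mathbf K_i,\mathbf X_i)$. Correct decoding set $\mathcal D^{(n)}:=\{(\mathbf x_1,\mathbf x_2):\psi^{(n)}(\phi_1^{(n)}(\mathbf x_1),\phi_2^{(n)}(\mathbf x_2))=(\mathbf x_1,\mathbf x_2)\}$; error probability $p_{\rm e}:=\Pr[(\mathbf X_1,\mathbf X_2)\notin\mathcal D^{(n)}]$. Fix a constant $\delta_0>0$. For $(\varepsilon,\delta)\in(0,1)\times[0,\delta_0]$, $(R_1,R_2)$ is an $(\varepsilon,\delta)$-reliable and secure rate pair if there is a sequence of systems $\{(\Phi_1^{(n)},\Phi_2^{(n)},\Psi^{(n)})\}_{n\ge1}$ such that for every $\gamma>0$ there is $n_0$ with, for all $n\ge n_0$: $\frac1n\log|\mathcal C_i^{(n)}|\le R_i+\gamma$ ($i=1,2$), $p_{\rm e}\le\varepsilon$, and $I(C_1^{(n)}C_2^{(n)};\mathbf X_1\mathbf X_2)\le\delta$. $\mathcal R^\ast(\varepsilon,\delta|p_{X_1X_2},p_{K_1K_2})$ is the set of such pairs. For $\gamma>0$ let $\tilde{\mathcal A}^{(n)}_\gamma$ be the set of $(\mathbf x_1,\mathbf x_2)\in\mathcal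 X_1^n\times\mathcal X_2^n$ with $\bigl|\frac1n\log\frac1{p^n_{X_i|X_{3-i}}(\mathbf x_i|\mathbf x_{3-i})}-H(X_i|X_{3-i})\bigr|\le\gamma$ for $i=1,2$ and $\bigl|\frac1n\log\frac1{p^n_{X_1X_2}(\mathbf x_1,\mathbf x_2)}-H(X_1X_2)\bigr|\le\gamma$. Set $\nu_n(\gamma):=p^n_{X_1X_2}((\tilde{\mathcal A}^{(n)}_\gamma)^c)$, $\nu_n(\gamma,\varepsilon):=\nu_n(\gamma)+\varepsilon$, and $\zeta_n(\gamma,\varepsilon,\delta):=\frac1n\Bigl[\frac{\delta}{1-\nu_n(\gamma,\varepsilon)}+\log\frac1{1-\nu_n(\gamma,\varepsilon)}\Bigr]$. *)

(* Defs.v *)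
From HB Require Import structures.
From mathcomp Require Import all_boot all_order all_algebra.
From mathcomp Require Import reals exp.
Set Implicit Arguments. Unset Strict Implicit. Unset Printing Implicit Defensive.
Import Order.TTheory GRing.Theory Num.Theory.
Local Open Scope ring_scope.

Section Defs.
Variable R : realType.

Definition log2 (x : R) : R := ln x / ln 2.

Definition is_pmf (T : finType) (p : T -> R) : Prop :=
  (forall t, 0 <= p t) /\ \sum_(t : T) p t = 1.

Definition marg1 (A B : finType) (p : A * B -> R) (a : A) : R := \sum_(b : B) p (a, b).
Definition marg2 (A B : finType) (p : A * B -> R) (b : B) : R := \sum_(a : A) p (a, b).

(* Shannon entropy (convention 0 log 0 = 0 is automatic since 0 * _ = 0) *)
Definition entropy (T : finType) (p : T -> R) : R := - \sum_(t : T) p t * log2 (p t).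

(* H(X1|X2) and H(X2|X1) for a joint pmf p on X1 * X2 *)
Definition centropy12 (A B : finType) (p : A * B -> R) : R :=
  - \sum_(ab : A * B) p ab * log2 (p ab / marg2 p ab.2).
Definition centropy21 (A B : finType) (p : A * B -> R) : R :=
  - \sum_(ab : A * B) p ab * log2 (p ab / marg1 p ab.1).

Definition minfo (A B : finType) (P : A * B -> R) : R :=
  \sum_(ab : A * B) P ab * log2 (P ab / (marg1 P ab.1 * marg2 P ab.2)).

Definition sq (T : finType) (n : nat) := {ffun 'I_n -> T}.

Definition pn (T : finType) (p : T -> R) (n : nat) (x : sq T n) : R :=
  \prod_(i < n) p (x i).
Definition pjn (A B : finType) (p : A * B -> R) (n : nat) (x : sq A n * sq B n) : R :=
  \prod_(i < n) p (x.1 i, x.2 i).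

Arguments pn {T} p n x.
Arguments pjn {A B} p n x.

(* distributed source encryption system at block length n;
   Phi_i takes (key, plaintext) *)
Record system (X1 X2 : finType) (n : nat) := System {
  C1 : finType; C2 : finType; M1 : finType; M2 : finType;
  Phi1 : sq X1 n -> sq X1 n -> C1;
  Phi2 : sq X2 n -> sq X2 n -> C2;
  Psi : sq X1 n -> sq X2 n -> C1 -> C2 -> sq X1 n * sq X2 n;
  phi1 : sq X1 n -> M1;
  phi2 : sq X2 n -> M2;
  psi : M1 -> M2 -> sq X1 n * sq X2 n;
  factor : forall k1 k2 x1 x2,
    Psi k1 k2 (Phi1 k1 x1) (Phi2 k2 x2) = psi (phi1 x1) (phi2 x2) }.
Arguments C1 {X1 X2 n} s.
Arguments C2 {X1 X2 n} s.
Arguments M1 {X1 X2 n} s.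
Arguments M2 {X1 X2 n} s.
Arguments Phi1 {X1 X2 n} s _ _.
Arguments Phi2 {X1 X2 n} s _ _.
Arguments Psi {X1 X2 n} s _ _ _ _.
Arguments phi1 {X1 X2 n} s _.
Arguments phi2 {X1 X2 n} s _.
Arguments psi {X1 X2 n} s _ _.

Variables (X1 X2 : finType).

Definition perr (p : X1 * X2 -> R) (n : nat) (S : system X1 X2 n) : R :=
  \sum_(x : sq X1 n * sq X2 n | psi S (phi1 S x.1) (phi2 S x.2) != x) pjn p n x.

(* joint law of ((C1,C2),(X1,X2)), keys independent of sources *)
Definition cipher_joint (p q : X1 * X2 -> R) (n : nat) (S : system X1 X2 n)
    (cx : (C1 S * C2 S) * (sq X1 n * sq X2 n)) : R :=
  pjn p n cx.2 *
  \sum_(k : sq X1 n * sq X2 n)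
     pjn q n k * ((Phi1 S k.1 cx.2.1 == cx.1.1) && (Phi2 S k.2 cx.2.2 == cx.1.2) : nat)%:R.

Definition leakage (p q : X1 * X2 -> R) (n : nat) (S : system X1 X2 n) : R :=
  minfo (@cipher_joint p q n S).

Definition rate_region (p q : X1 * X2 -> R) (eps delta : R) (R1 R2 : R) : Prop :=
  exists sys : forall n : nat, system X1 X2 n,
    forall gamma : R, 0 < gamma -> exists n0 : nat, forall n : nat, (n0 <= n)%N ->
      [/\ n%:R^-1 * log2 (#|C1 (sys n)|%:R) <= R1 + gamma,
          n%:R^-1 * log2 (#|C2 (sys n)|%:R) <= R2 + gamma,
          perr p (sys n) <= eps &
          leakage p q (sys n) <= delta].

Definition typical (p : X1 * X2 -> R) (n : nat) (gamma : R) (x : sq X1 n * sq X2 n) : bool :=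
  [&& `| n%:R^-1 * log2 (1 / (pjn p n x / pn (marg2 p) n x.2)) - centropy12 p | <= gamma,
      `| n%:R^-1 * log2 (1 / (pjn p n x / pn (marg1 p) n x.1)) - centropy21 p | <= gamma &
      `| n%:R^-1 * log2 (1 / pjn p n x) - entropy p | <= gamma].

Definition nu (p : X1 * X2 -> R) (n : nat) (gamma : R) : R :=
  \sum_(x : sq X1 n * sq X2 n | ~~ typical p gamma x) pjn p n x.

Definition nu_eps (p : X1 * X2 -> R) (n : nat) (gamma eps : R) : R := nu p n gamma + eps.

Definition zeta (p : X1 * X2 -> R) (n : nat) (gamma eps delta : R) : R :=
  n%:R^-1 * (delta / (1 - nu_eps p n gamma eps) + log2 (1 / (1 - nu_eps p n gamma eps))).

End Defs.

(* Main.v *)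
Require Import Defs.
From HB Require Import structures.
From mathcomp Require Import all_boot all_order all_algebra.
From mathcomp Require Import reals exp ring lra zify.
Import Order.TTheory GRing.Theory Num.Theory.
Local Open Scope ring_scope.

Section Gen.
Variable R : realType.

Lemma ln_le_sub1 (x : R) : 0 < x -> ln x <= x - 1.
Proof.
move=> x0; have := @le_ln1Dx R (x - 1).
rewrite addrCA subrr addr0; apply; lra.
Qed.

Lemma sum_eq1 (C : finType) (a : C) : \sum_(c : C) (((a == c) : nat)%:R : R) = 1.
Proof.
rewrite (bigD1 a) //= eqxx big1 ?addr0 // => c /negbTE.
by rewrite eq_sym => ->.
Qed.

Lemma prod_if1 n (i : 'I_n) (a : 'I_n -> R) :
  \prod_(l < n) (if l == i then a l else 1) = a i.
Proof.
rewrite (bigD1 i) //= eqxx big1 ?mulr1 // => l /negbTE ->. done.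
Qed.

Definition iidsum (Y T : finType) (n : nat) (ev : Y -> 'I_n -> T) :=
  forall F : 'I_n -> T -> R,
    \sum_(y : Y) \prod_(i < n) F i (ev y i) = \prod_(i < n) \sum_(t : T) F i t.

Lemma iid_single (T : finType) n : @iidsum (sq T n) T n (fun y i => y i).
Proof. by move=> F; rewrite bigA_distr_bigA. Qed.

Lemma iid_pair (A B : finType) n :
  @iidsum (sq A n * sq B n)%type (A * B)%type n (fun y i => (y.1 i, y.2 i)).
Proof.
move=> F; rewrite -(pair_bigA _ (fun (f : sq A n) (g : sq B n) => \prod_(i < n) F i (f i, g i))) /=.
under eq_bigr => f _ do rewrite -(bigA_distr_bigA (fun i b => F i (f i, b))).
rewrite -(bigA_distr_bigA (fun i a => \sum_b F i (a, b))).
transitivity (\prod_(i < n) \sum_a \sum_b F i (a, b)); first by [].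
by apply: eq_bigr => i _; rewrite (pair_bigA _ (fun a b => F i (a, b))); apply: eq_bigr => -[].
Qed.

Lemma ln_prod n (F : 'I_n -> R) : (forall i, 0 < F i) ->
  ln (\prod_(i < n) F i) = \sum_(i < n) ln (F i).
Proof.
move=> Fp.
suff: 0 < \prod_(i < n) F i /\ ln (\prod_(i < n) F i) = \sum_(i < n) ln (F i) by case.
apply: (big_rec2 (fun a b => 0 < a /\ ln a = b)); first by rewrite ln1.
move=> i a b _ [a0 <-]; split; first by rewrite mulr_gt0.
by rewrite lnM // posrE.
Qed.

Lemma prod_gt0_each n (F : 'I_n -> R) : (forall i, 0 <= F i) ->
  0 < \prod_(i < n) F i -> forall i, 0 < F i.
Proof.
move=> F0 Pp i; rewrite lt_neqAle F0 andbT; apply/eqP => Fi0.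
by move: Pp; rewrite (bigD1 i) //= -Fi0 mul0r ltxx.
Qed.


Section Cheb.
Variables (Y T : finType) (n : nat) (ev : Y -> 'I_n -> T).
Hypothesis iid : @iidsum Y T n ev.
Variable p : T -> R.
Hypothesis p1 : \sum_t p t = 1.
Variable g : T -> R.

Definition mean := \sum_t p t * g t.
Definition hc t := g t - mean.
Definition var := \sum_t p t * (hc t * hc t).
Definition Pr y := \prod_(i < n) p (ev y i).

Lemma second_moment :
  \sum_y Pr y * (\sum_(i < n) hc (ev y i)) ^+ 2 = n%:R * var.
Proof.
have E y : Pr y * (\sum_(i < n) hc (ev y i)) ^+ 2 =
    \sum_(i < n) \sum_(j < n) Pr y * (hc (ev y i) * hc (ev y j)).
  rewrite expr2 mulr_suml mulr_sumr; apply: eq_bigr => i _.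
  by rewrite mulr_sumr mulr_sumr.
under eq_bigr => y _ do rewrite E.
rewrite exchange_big /=.
under eq_bigr => i _ do rewrite exchange_big /=.
have key : forall i j : 'I_n,
  \sum_y Pr y * (hc (ev y i) * hc (ev y j)) = if i == j then var else 0.
  move=> i j.
  pose F l t := p t * ((if l == i then hc t else 1) * (if l == j then hc t else 1)).
  transitivity (\sum_y \prod_(l < n) F l (ev y l)).
    apply: eq_bigr => y _; rewrite /F big_split /= big_split /=.
    by rewrite (@prod_if1 _ i (fun l => hc (ev y l))) (@prod_if1 _ j (fun l => hc (ev y l))).
  rewrite iid (bigD1 i) //= /F.
  case: (eqVneq i j) => [<-|ij].
    rewrite [X in _ * X]big1 ?mulr1; first by apply: eq_bigr => t _; rewrite eqxx.
    move=> l /negbTE li; rewrite li; transitivity (\sum_t p t); last exact: p1.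
    by apply: eq_bigr => t _; rewrite !mulr1.
  rewrite eqxx.
  suff -> : \sum_t p t * (hc t * 1) = 0 by rewrite mul0r.
  under eq_bigr => t _ do rewrite mulr1 /hc mulrBr.
  by rewrite sumrB -mulr_suml p1 mul1r /mean subrr.
under eq_bigr => i _ do under eq_bigr => j _ do rewrite key.
transitivity (\sum_(i < n) var); last by rewrite sumr_const card_ord mulr_natl.
apply: eq_bigr => i _.
rewrite (bigD1 i) //= eqxx big1 ?addr0 // => j /negbTE ji.
by rewrite eq_sym ji.
Qed.

Lemma cheb (f : Y -> R) (gam : R) : (forall t, 0 <= p t) -> 0 < gam -> (0 < n)%N ->
  (forall y, 0 < Pr y -> f y = n%:R^-1 * \sum_(i < n) hc (ev y i)) ->
  \sum_(y | ~~ (`|f y| <= gam)) Pr y <= var / (n%:R * gam ^+ 2).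
Proof.
move=> p0 g0 n0 fE.
have Pr0 y : 0 <= Pr y by apply: prodr_ge0 => i _.
have n0R : 0 < (n%:R : R) by rewrite ltr0n.
apply: (@le_trans _ _ (\sum_y Pr y * (\sum_(i < n) hc (ev y i)) ^+ 2 / (n%:R ^+ 2 * gam ^+ 2))).
  rewrite [X in X <= _]big_mkcond; apply: ler_sum => y _.
  have dpos : 0 < n%:R ^+ 2 * gam ^+ 2 :> R by rewrite mulr_gt0 // exprn_gt0.
  case: ifP => [nb|_]; last first.
    by rewrite divr_ge0 ?(ltW dpos) // mulr_ge0 // sqr_ge0.
  have [P0|Ppos] : Pr y = 0 \/ 0 < Pr y.
    by move: (Pr0 y); rewrite le_eqVlt => /orP [/eqP <-|->]; [left|right].
    by rewrite P0 !mul0r.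
  move: nb; rewrite (fE y Ppos) -ltNge => nb.
  set S := \sum_(i < n) hc (ev y i) in nb *.
  have -> : Pr y * S ^+ 2 / (n%:R ^+ 2 * gam ^+ 2) =
     Pr y * ((n%:R^-1 * S) ^+ 2 / gam ^+ 2).
    by field; rewrite (gt_eqF n0R) (gt_eqF g0).
  rewrite ler_pMr // ler_pdivlMr ?exprn_gt0 // mul1r.
  rewrite -(real_normK (num_real (n%:R^-1 * S))) !expr2.
  set u := `|_| in nb *.
  nra.
rewrite -mulr_suml second_moment.
have -> : n%:R * var / (n%:R ^+ 2 * gam ^+ 2) = var / (n%:R * gam ^+ 2).
  by field; rewrite (gt_eqF n0R) (gt_eqF g0).
exact: lexx.
Qed.

End Cheb.
End Gen.


Section Core.
Variable R : realType.
Variables (X K C Xs K1 : finType) (P : X -> R) (Q : K -> R) (Phi : K -> X -> C)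
  (G : X -> Xs) (h : K -> K1) (P2 : Xs -> R) (A : pred X).
Hypotheses (P0 : forall x, 0 <= P x) (P1 : \sum_x P x = 1)
  (Q0 : forall k, 0 <= Q k) (Q1s : \sum_k Q k = 1)
  (P20 : forall s, 0 <= P2 s) (P21 : \sum_s P2 s <= 1)
  (PA : forall x, A x -> 0 < P x) (P2A : forall x, A x -> 0 < P2 (G x))
  (Inj : forall x x' k k', A x -> A x' -> G x = G x' -> h k = h k' ->
          Phi k x = Phi k' x' -> x = x').

Definition ind k x c : R := ((Phi k x == c) : nat)%:R.
Definition Q1 k1 := \sum_(k | h k == k1) Q k.
Definition W c x := \sum_k Q k * ind k x c.
Definition WC c := \sum_x P x * W c x.
Definition V k1 x c := \sum_(k | h k == k1) Q k * ind k x c.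
Definition alpha := \sum_(x | A x) P x.
Definition Dx x := \sum_c W c x * (ln (W c x) - ln (WC c)).

Lemma ind_ge0 k x c : 0 <= ind k x c.
Proof. by rewrite /ind ler0n. Qed.

Lemma sum_ind k x : \sum_c ind k x c = 1.
Proof. exact: sum_eq1. Qed.

Lemma W_ge0 c x : 0 <= W c x.
Proof. by apply: sumr_ge0 => k _; rewrite mulr_ge0 ?ind_ge0. Qed.

Lemma sumW x : \sum_c W c x = 1.
Proof.
rewrite /W exchange_big /= -Q1s; apply: eq_bigr => k _.
by rewrite -mulr_sumr sum_ind mulr1.
Qed.

Lemma WC_ge0 c : 0 <= WC c.
Proof. by apply: sumr_ge0 => x _; rewrite mulr_ge0 ?W_ge0. Qed.

Lemma sumWC : \sum_c WC c = 1.
Proof.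
rewrite /WC exchange_big /= -P1; apply: eq_bigr => x _.
by rewrite -mulr_sumr sumW mulr1.
Qed.

Lemma Q1_ge0 k1 : 0 <= Q1 k1.
Proof. by apply: sumr_ge0. Qed.

Lemma sumQ1 : \sum_k1 Q1 k1 = 1.
Proof. by rewrite -Q1s (partition_big h xpredT) //. Qed.

Lemma inner x (a : R) (bk : K -> R) (e : C -> R) :
  \sum_c \sum_k P x * Q k * ind k x c * (a + bk k + e c) =
  P x * a + P x * \sum_k Q k * bk k + P x * \sum_c W c x * e c.
Proof.
have E : forall c k, P x * Q k * ind k x c * (a + bk k + e c) =
  P x * a * (Q k * ind k x c) + P x * (Q k * bk k) * ind k x c
  + P x * e c * (Q k * ind k x c) by move=> c k; ring.
under eq_bigr => c _ do under eq_bigr => k _ do rewrite E.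
under eq_bigr => c _ do rewrite big_split big_split /=.
rewrite big_split big_split /=.
congr (_ + _ + _).
- rewrite -[RHS]mulr1 -(sumW x) mulr_sumr; apply: eq_bigr => c _.
  by rewrite -mulr_sumr.
- rewrite exchange_big /= mulr_sumr; apply: eq_bigr => k _.
  by rewrite -mulr_sumr sum_ind mulr1.
- rewrite mulr_sumr; apply: eq_bigr => c _.
  rewrite -mulr_sumr -/(W c x); ring.
Qed.


Lemma step2 x c k : A x ->
  P x * Q k * ind k x c *
    (ln alpha + ln (P2 (G x)) - ln (P x) + ln (Q1 (h k)) + (ln (WC c) - ln (W c x)))
  <= P x * Q k * ind k x c *
    (alpha * P2 (G x) * Q1 (h k) * WC c / (P x * V (h k) x c) - 1).
Proof.
move=> Ax.
have [pk|npk] := eqVneq (Phi k x) c; last first.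
  have ind0 : ind k x c = 0 by rewrite /ind (negbTE npk).
  by rewrite ind0 mulr0 !mul0r.
have [Qk0|Qkp] : Q k = 0 \/ 0 < Q k.
  by move: (Q0 k); rewrite le_eqVlt => /orP [/eqP <-|->]; [left|right].
  by rewrite Qk0 mulr0 !mul0r.
have ind1 : ind k x c = 1 by rewrite /ind pk eqxx.
have Px := PA _ Ax.
have Vge : Q k <= V (h k) x c.
  rewrite /V (bigD1 k) //= ind1 mulr1 lerDl.
  by apply: sumr_ge0 => k' _; rewrite mulr_ge0 ?ind_ge0.
have Wge : V (h k) x c <= W c x.
  rewrite /W (bigID (fun k' => h k' == h k)) /= lerDl.
  by apply: sumr_ge0 => k' _; rewrite mulr_ge0 ?ind_ge0.
have Q1ge : Q k <= Q1 (h k).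
  by rewrite /Q1 (bigD1 k) //= lerDl; apply: sumr_ge0.
have Wp : 0 < W c x by apply: lt_le_trans Qkp (le_trans Vge Wge).
have WCge : P x * W c x <= WC c.
  rewrite /WC (bigD1 x) //= lerDl.
  by apply: sumr_ge0 => x' _; rewrite mulr_ge0 ?W_ge0.
have age : P x <= alpha.
  by rewrite /alpha (bigD1 x) //= lerDl; apply: sumr_ge0.
have Vp : 0 < V (h k) x c by apply: lt_le_trans Qkp Vge.
have Q1p : 0 < Q1 (h k) by apply: lt_le_trans Qkp Q1ge.
have WCp : 0 < WC c by apply: lt_le_trans (mulr_gt0 Px Wp) WCge.
have ap : 0 < alpha by apply: lt_le_trans Px age.
have P2p := P2A _ Ax.
have L : ln alpha + ln (P2 (G x)) - ln (P x) + ln (Q1 (h k)) + (ln (WC c) - ln (W c x))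
   = ln (alpha * P2 (G x) * Q1 (h k) * WC c / (P x * W c x)).
  rewrite ln_div ?posrE ?mulr_gt0 // !lnM ?posrE ?mulr_gt0 //; ring.
rewrite L ind1 mulr1; apply: ler_wpM2l; first by rewrite mulr_ge0 // ltW.
set z := alpha * P2 (G x) * Q1 (h k) * WC c.
have zp : 0 < z by rewrite /z !mulr_gt0.
apply: (@le_trans _ _ (ln (z / (P x * V (h k) x c)))); last first.
  by apply: ln_le_sub1; rewrite divr_gt0 ?mulr_gt0.
rewrite ler_ln ?posrE ?divr_gt0 ?mulr_gt0 //.
apply: ler_wpM2l; first exact: ltW.
by rewrite lef_pV2 ?posrE ?mulr_gt0 // ler_wpM2l // ltW.
Qed.


Lemma sum_atmost1 (T : finType) (S : pred T) (a : R) : 0 <= a ->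
  (forall x x', S x -> S x' -> x = x') -> \sum_(x | S x) a <= a.
Proof.
move=> a0 uS; case: (pickP S) => [x0 Sx0|none]; last by rewrite big_pred0.
rewrite (eq_bigl (pred1 x0)) ?big_pred1_eq // => x /=.
apply/idP/eqP => [Sx|->//]; exact: uS.
Qed.

Lemma V_ex k1 x c : V k1 x c != 0 -> exists k, h k = k1 /\ Phi k x = c.
Proof.
move=> Vn0.
have [/existsP [k /andP [/eqP hk /eqP pk]] | none] :=
  boolP [exists k, (h k == k1) && (Phi k x == c)]; first by exists k.
move: Vn0; rewrite /V big1 ?eqxx // => k hk.
move: none; rewrite negb_exists => /forallP /(_ k); rewrite hk /= => /negbTE pk.
by rewrite /ind pk mulr0.
Qed.

Lemma bound1 k1 c : \sum_(x | A x) P2 (G x) * ((V k1 x c != 0) : nat)%:R <= 1.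
Proof.
rewrite (eq_bigr (fun x => if V k1 x c != 0 then P2 (G x) else 0)); last first.
  by move=> x _; case: (V k1 x c != 0); rewrite ?mulr1 ?mulr0.
rewrite -big_mkcondr (partition_big G xpredT) //=.
apply: le_trans P21; apply: ler_sum => s _.
rewrite (eq_bigr (fun _ => P2 s)); last by move=> x /andP [_ /eqP ->].
apply: sum_atmost1 => // x x' /andP [/andP [Ax Vx] /eqP Gx] /andP [/andP [Ax' Vx'] /eqP Gx'].
have [k [hk pk]] := V_ex _ _ _ Vx; have [k' [hk' pk']] := V_ex _ _ _ Vx'.
apply: (Inj _ _ k k' Ax Ax'); first by rewrite Gx Gx'.
  by rewrite hk hk'.
by rewrite pk pk'.
Qed.

Lemma vdiv (v s : R) : v * (s / v) = s * ((v != 0) : nat)%:R.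
Proof.
have [->|vn0] := eqVneq v 0; first by rewrite mul0r mulr0.
by rewrite /= mulr1 mulrCA divff // mulr1.
Qed.

Lemma step3 :
  \sum_(x | A x) \sum_c \sum_k P x * Q k * ind k x c *
     (alpha * P2 (G x) * Q1 (h k) * WC c / (P x * V (h k) x c)) <= alpha.
Proof.
have E : forall x c, A x -> \sum_k P x * Q k * ind k x c *
     (alpha * P2 (G x) * Q1 (h k) * WC c / (P x * V (h k) x c)) =
   \sum_k1 alpha * (Q1 k1 * WC c * (P2 (G x) * ((V k1 x c != 0) : nat)%:R)).
  move=> x c Ax; have Pn0 : P x != 0 by rewrite gt_eqF // PA.
  rewrite (partition_big h xpredT) //=; apply: eq_bigr => k1 _.
  transitivity (\sum_(k | h k == k1) Q k * ind k x c *
                 (alpha * P2 (G x) * Q1 k1 * WC c / V k1 x c)).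
    apply: eq_bigr => k /eqP hk; rewrite hk invfM.
    set w := (V k1 x c)^-1; by field.
  rewrite -mulr_suml -/(V k1 x c) vdiv; ring.
rewrite (eq_bigr (fun x => \sum_c \sum_k1 alpha * (Q1 k1 * WC c *
    (P2 (G x) * ((V k1 x c != 0) : nat)%:R)))); last first.
  by move=> x Ax; apply: eq_bigr => c _; apply: E.
rewrite exchange_big /=.
apply: (@le_trans _ _ (\sum_c \sum_k1 alpha * (Q1 k1 * WC c))); last first.
  rewrite -[X in _ <= X]mulr1 -sumWC mulr_sumr; rewrite le_eqVlt; apply/orP; left; apply/eqP.
  apply: eq_bigr => c _; rewrite -mulr_sumr -mulr_suml sumQ1; ring.
apply: ler_sum => c _; rewrite exchange_big /=; apply: ler_sum => k1 _.
rewrite -mulr_sumr; apply: ler_wpM2l.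
  by apply: sumr_ge0 => x _; apply: P0.
rewrite -mulr_sumr -[X in _ <= X]mulr1; apply: ler_wpM2l.
  by rewrite mulr_ge0 ?Q1_ge0 ?WC_ge0.
exact: bound1.
Qed.


Lemma sumPQind x : \sum_c \sum_k P x * Q k * ind k x c = P x.
Proof.
transitivity (\sum_c P x * W c x); last by rewrite -mulr_sumr sumW mulr1.
apply: eq_bigr => c _; rewrite /W mulr_sumr; apply: eq_bigr => k _; by rewrite mulrA.
Qed.

Lemma core : alpha * ln alpha + \sum_(x | A x) P x * (ln (P2 (G x)) - ln (P x))
   + alpha * \sum_k1 Q1 k1 * ln (Q1 k1) <= \sum_(x | A x) P x * Dx x.
Proof.
set y := fun x c k => alpha * P2 (G x) * Q1 (h k) * WC c / (P x * V (h k) x c).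
set B := \sum_(x | A x) \sum_c \sum_k P x * Q k * ind k x c *
   (ln alpha + ln (P2 (G x)) - ln (P x) + ln (Q1 (h k)) + (ln (WC c) - ln (W c x))).
have S1 : B <= 0.
  apply: (@le_trans _ _ (\sum_(x | A x) \sum_c \sum_k P x * Q k * ind k x c * (y x c k - 1))).
    apply: ler_sum => x Ax; apply: ler_sum => c _; apply: ler_sum => k _; exact: step2.
  have T : forall x, \sum_c \sum_k P x * Q k * ind k x c * (y x c k - 1) =
     \sum_c \sum_k P x * Q k * ind k x c * y x c k - P x.
    move=> x; transitivity (\sum_c \sum_k P x * Q k * ind k x c * y x c k -
       \sum_c \sum_k P x * Q k * ind k x c); last by rewrite sumPQind.
    rewrite -sumrB; apply: eq_bigr => c _.
    rewrite -sumrB; apply: eq_bigr => k _; ring.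
  under eq_bigr => x _ do rewrite T.
  rewrite sumrB subr_le0; exact: step3.
have E : B = alpha * ln alpha + \sum_(x | A x) P x * (ln (P2 (G x)) - ln (P x))
   + alpha * \sum_k1 Q1 k1 * ln (Q1 k1) - \sum_(x | A x) P x * Dx x.
  rewrite /B.
  under eq_bigr => x _ do rewrite (inner x (ln alpha + ln (P2 (G x)) - ln (P x))
      (fun k => ln (Q1 (h k))) (fun c => ln (WC c) - ln (W c x))).
  rewrite !big_split /=.
  have E1 : \sum_(x | A x) P x * (ln alpha + ln (P2 (G x)) - ln (P x)) =
     alpha * ln alpha + \sum_(x | A x) P x * (ln (P2 (G x)) - ln (P x)).
    rewrite /alpha mulr_suml -big_split /=; apply: eq_bigr => x _; ring.
  have E2 : \sum_(x | A x) P x * \sum_k Q k * ln (Q1 (h k)) =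
     alpha * \sum_k1 Q1 k1 * ln (Q1 k1).
    rewrite -mulr_suml; congr (_ * _).
    rewrite (partition_big h xpredT) //=; apply: eq_bigr => k1 _.
    rewrite /Q1 mulr_suml; apply: eq_bigr => k /eqP ->; done.
  have E3 : \sum_(x | A x) P x * \sum_c W c x * (ln (WC c) - ln (W c x)) =
     - \sum_(x | A x) P x * Dx x.
    rewrite -sumrN; apply: eq_bigr => x _; rewrite /Dx -mulrN -sumrN.
    congr (_ * _); apply: eq_bigr => c _; ring.
  rewrite E1 E2 E3; ring.
move: S1; rewrite E; lra.
Qed.

Lemma Dx_ge0 x : 0 < P x -> 0 <= Dx x.
Proof.
move=> Px; rewrite /Dx -oppr_le0 -sumrN.
apply: (@le_trans _ _ (\sum_c (WC c - W c x))); last first.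
  by rewrite sumrB sumWC sumW subrr.
apply: ler_sum => c _.
have [W0|Wp] : W c x = 0 \/ 0 < W c x.
  by move: (W_ge0 c x); rewrite le_eqVlt => /orP [/eqP <-|->]; [left|right].
  by rewrite W0 mul0r !oppr0 addr0 WC_ge0.
have WCge : P x * W c x <= WC c.
  rewrite /WC (bigD1 x) //= lerDl.
  by apply: sumr_ge0 => x' _; rewrite mulr_ge0 ?W_ge0.
have WCp : 0 < WC c by apply: lt_le_trans (mulr_gt0 Px Wp) WCge.
rewrite -mulrN opprB -ln_div ?posrE //.
have := @ln_le_sub1 R _ (divr_gt0 WCp Wp).
move=> H; rewrite -(ler_pM2l Wp) in H.
apply: le_trans H _; by rewrite mulrBr mulr1 mulrCA divff ?gt_eqF // mulr1 lexx.
Qed.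

End Core.

Section Fin.
Variable R : realType.

Lemma final_alg (a b nn d Hc Hk g : R) : 0 < b -> b <= a -> 0 < nn -> 0 <= d ->
  a * ln a + a * nn * ln 2 * (Hc - g) - a * nn * ln 2 * Hk <= ln 2 * d ->
  Hc <= Hk + g + nn^-1 * (d / b + log2 (1 / b)).
Proof.
move=> b0 ba nn0 d0 H.
have a0 : 0 < a by apply: lt_le_trans ba.
have L0 : 0 < ln 2 :> R by apply: ln_gt0; lra.
have vu : ln b <= ln a by rewrite ler_ln ?posrE.
set L := ln 2 in L0 H *; set u := ln a in vu H; set v := ln b in vu.
set X := Hc - g - Hk.
have h1 : (nn * L * X + u) * a <= L * d.
  by apply: le_trans H; rewrite le_eqVlt; apply/orP; left; apply/eqP; rewrite /X; ring.
have h2 : nn * L * X + u <= L * d / a by rewrite ler_pdivlMr.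
have h3 : L * d / a <= L * d / b.
  apply: ler_wpM2l; first by rewrite mulr_ge0 // ltW.
  by rewrite lef_pV2 ?posrE.
have g1 : X <= (L * d / b - v) / (nn * L).
  rewrite ler_pdivlMr ?mulr_gt0 //.
  have -> : X * (nn * L) = nn * L * X by ring.
  lra.
have -> : nn^-1 * (d / b + log2 (1 / b)) = (L * d / b - v) / (nn * L).
  rewrite /log2 div1r lnV ?posrE // -/v -/L.
  by field; rewrite !gt_eqF.
move: g1; rewrite /X; lra.
Qed.

End Fin.

Section Case.
Variable R : realType.
Variables (X K C Xs K1 : finType) (P : X -> R) (Q : K -> R) (Phi : K -> X -> C)
  (G : X -> Xs) (h : K -> K1) (P2 : Xs -> R) (A : pred X).
Hypotheses (P0 : forall x, 0 <= P x) (P1 : \sum_x P x = 1)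
  (Q0 : forall k, 0 <= Q k) (Q1s : \sum_k Q k = 1)
  (P20 : forall s, 0 <= P2 s) (P21 : \sum_s P2 s <= 1)
  (PA : forall x, A x -> 0 < P x) (P2A : forall x, A x -> 0 < P2 (G x))
  (Inj : forall x x' k k', A x -> A x' -> G x = G x' -> h k = h k' ->
          Phi k x = Phi k' x' -> x = x').

Lemma case_bound (n : nat) (Hc Hk g d b : R) : (0 < n)%N ->
  \sum_k1 Q1 R K K1 Q h k1 * ln (Q1 R K K1 Q h k1) = - (n%:R * ln 2 * Hk) ->
  (forall x, A x -> n%:R * ln 2 * (Hc - g) <= ln (P2 (G x)) - ln (P x)) ->
  \sum_x P x * Dx R X K C P Q Phi x <= ln 2 * d -> 0 <= d -> 0 < b -> b <= alpha R X P A ->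
  Hc <= Hk + g + n%:R^-1 * (d / b + log2 (1 / b)).
Proof.
move=> n0 HQ Ht HD d0 b0 ba.
have Cc := core R X K C Xs K1 P Q Phi G h P2 A P0 P1 Q0 Q1s P20 P21 PA P2A Inj.
rewrite HQ in Cc.
have S1 : \sum_(x | A x) P x * Dx R X K C P Q Phi x <= \sum_x P x * Dx R X K C P Q Phi x.
  rewrite [X in _ <= X](bigID A) /= lerDl; apply: sumr_ge0 => x _.
  have [P0x|Px] : P x = 0 \/ 0 < P x.
    by move: (P0 x); rewrite le_eqVlt => /orP [/eqP <-|->]; [left|right].
    by rewrite P0x mul0r.
  by rewrite mulr_ge0 ?(Dx_ge0 R X K C P Q Phi P0 P1 Q0 Q1s) // ltW.
have S2 : alpha R X P A * (n%:R * ln 2 * (Hc - g)) <=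
          \sum_(x | A x) P x * (ln (P2 (G x)) - ln (P x)).
  rewrite /alpha mulr_suml; apply: ler_sum => x Ax.
  by apply: ler_wpM2l; [exact: P0 | exact: Ht].
apply: (@final_alg R (alpha R X P A) b n%:R d Hc Hk g) => //; first by rewrite ltr0n.
move: Cc S1 S2 HD; set al := alpha R X P A; set T := \sum_(x | A x) _.
set T2 := \sum_(x | A x) _; set T3 := \sum_x _.
move=> Cc S1 S2 HD.
have -> : al * ln al + al * n%:R * ln 2 * (Hc - g) - al * n%:R * ln 2 * Hk
   = al * ln al + al * (n%:R * ln 2 * (Hc - g)) + al * - (n%:R * ln 2 * Hk) by ring.
lra.
Qed.

End Case.


Section Conc.
Variable R : realType.

Lemma pr_ge0 (Y T : finType) n (ev : Y -> 'I_n -> T) (r : T -> R) :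
  (forall t, 0 <= r t) -> forall y, 0 <= Pr R Y T n ev r y.
Proof. by move=> r0 y; apply: prodr_ge0. Qed.

Lemma sum_Pr (Y T : finType) n (ev : Y -> 'I_n -> T) (r : T -> R) :
  @iidsum R Y T n ev -> \sum_t r t = 1 -> \sum_y Pr R Y T n ev r y = 1.
Proof.
move=> iid r1; rewrite /Pr (iid (fun _ t => r t)).
by rewrite big1 // => i _; rewrite r1.
Qed.

Lemma entropy_iid (Y T : finType) n (ev : Y -> 'I_n -> T) (r : T -> R) :
  @iidsum R Y T n ev -> (forall t, 0 <= r t) -> \sum_t r t = 1 ->
  \sum_y Pr R Y T n ev r y * ln (Pr R Y T n ev r y) = n%:R * \sum_t r t * ln (r t).
Proof.
move=> iid r0 r1.
pose F (j l : 'I_n) t := if l == j then r t * ln (r t) else r t.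
have E1 y : Pr R Y T n ev r y * ln (Pr R Y T n ev r y) = \sum_(j < n) \prod_(l < n) F j l (ev y l).
  have E2 j : \prod_(l < n) F j l (ev y l) = Pr R Y T n ev r y * ln (r (ev y j)).
    rewrite /Pr (bigD1 j) //= [in RHS](bigD1 j) //= /F eqxx.
    rewrite (eq_bigr (fun l => r (ev y l))); last by move=> l /negbTE ->.
    ring.
  under [RHS]eq_bigr => j _ do rewrite E2.
  rewrite -mulr_sumr.
  have [P0|Pp] : Pr R Y T n ev r y = 0 \/ 0 < Pr R Y T n ev r y.
    by move: (@pr_ge0 _ _ _ ev r r0 y); rewrite le_eqVlt => /orP [/eqP <-|->]; [left|right].
    by rewrite P0 !mul0r.
  by rewrite /Pr ln_prod // => i; apply: prod_gt0_each Pp i => l; apply: r0.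
under eq_bigr => y _ do rewrite E1.
rewrite exchange_big /=.
under eq_bigr => j _ do rewrite iid.
transitivity (\sum_(j < n) \sum_t r t * ln (r t)); last by rewrite sumr_const card_ord mulr_natl.
apply: eq_bigr => j _.
rewrite (bigD1 j) //= /F eqxx [X in _ * X]big1 ?mulr1 // => l /negbTE ->; exact: r1.
Qed.

Lemma log2_ratio (Y T : finType) n (ev : Y -> 'I_n -> T) (p r : T -> R) y :
  (forall t, 0 <= p t) -> (forall t, p t <= r t) -> 0 < Pr R Y T n ev p y ->
  log2 (1 / (Pr R Y T n ev p y / \prod_(i < n) r (ev y i))) =
  \sum_(i < n) - log2 (p (ev y i) / r (ev y i)).
Proof.
move=> p0 pr Pp.
have pi i : 0 < p (ev y i) by apply: prod_gt0_each Pp i => l; apply: p0.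
have ri i : 0 < r (ev y i) by apply: lt_le_trans (pi i) (pr _).
have Rp : 0 < \prod_(i < n) r (ev y i) by apply: prodr_gt0 => i _.
rewrite div1r invf_div /log2 ln_div ?posrE //.
rewrite /Pr !ln_prod // -sumrB mulr_suml; apply: eq_bigr => i _.
rewrite ln_div ?posrE //; ring.
Qed.

Lemma mean_center (n : nat) (g : 'I_n -> R) (m : R) : (0 < n)%N ->
  n%:R^-1 * \sum_(i < n) (g i - m) = n%:R^-1 * \sum_(i < n) g i - m.
Proof.
move=> n0; rewrite sumrB sumr_const card_ord -mulr_natl.
by field; rewrite pnatr_eq0 -lt0n.
Qed.

End Conc.


Section Sys.
Variable R : realType.
Variables (X1 X2 : finType) (p q : X1 * X2 -> R) (n : nat) (S : system X1 X2 n).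
Hypotheses (p0 : forall t, 0 <= p t) (p1 : \sum_t p t = 1)
  (q0 : forall t, 0 <= q t) (q1 : \sum_t q t = 1).

Local Notation Xt := (sq X1 n * sq X2 n)%type.
Local Notation Ct := (C1 S * C2 S)%type.
Definition evp : Xt -> 'I_n -> X1 * X2 := fun y i => (y.1 i, y.2 i).
Definition PhiS (k x : Xt) : Ct := (Phi1 S k.1 x.1, Phi2 S k.2 x.2).

Lemma pjn_ge0 (r : X1 * X2 -> R) : (forall t, 0 <= r t) -> forall x, 0 <= @pjn R _ _ r n x.
Proof. by move=> r0 x; apply: prodr_ge0. Qed.

Lemma pjn_sum (r : X1 * X2 -> R) : \sum_t r t = 1 -> \sum_x @pjn R _ _ r n x = 1.
Proof. move=> r1; exact: (@sum_Pr R _ _ n evp r (@iid_pair R X1 X2 n) r1). Qed.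

Local Notation P := (@pjn R _ _ p n).
Local Notation Q := (@pjn R _ _ q n).
Local Notation Wn := (W R Xt Xt Ct Q PhiS).
Local Notation WCn := (WC R Xt Xt Ct P Q PhiS).

Lemma cjE c x : @cipher_joint R _ _ p q n S (c, x) = P x * Wn c x.
Proof.
by rewrite /cipher_joint /W /ind /=.
Qed.

Lemma leak : ln 2 * leakage p q S = \sum_x P x * Dx R Xt Xt Ct P Q PhiS x.
Proof.
have m2 x : marg2 (@cipher_joint R _ _ p q n S) x = P x.
  rewrite /marg2 (eq_bigr (fun c => P x * Wn c x)); last by move=> c _; rewrite cjE.
  by rewrite -mulr_sumr sumW ?mulr1 //; apply: pjn_sum.
have m1 c : marg1 (@cipher_joint R _ _ p q n S) c = WCn c.
  by rewrite /marg1 /WC; apply: eq_bigr => x _; rewrite cjE.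
rewrite /leakage /minfo.
rewrite -(pair_bigA _ (fun (c : Ct) (x : Xt) => @cipher_joint R _ _ p q n S (c, x) *
   log2 (@cipher_joint R _ _ p q n S (c, x) /
     (marg1 (@cipher_joint R _ _ p q n S) c * marg2 (@cipher_joint R _ _ p q n S) x)))) /=.
rewrite exchange_big /= mulr_sumr; apply: eq_bigr => x _.
rewrite /Dx !mulr_sumr; apply: eq_bigr => c _.
rewrite cjE m1 m2.
have [P0|Pp] : P x = 0 \/ 0 < P x.
  by move: (@pjn_ge0 p p0 x); rewrite le_eqVlt => /orP [/eqP <-|->]; [left|right].
  by rewrite P0 !mul0r mulr0.
have W0 : 0 <= Wn c x by apply: W_ge0 => k; apply: pjn_ge0.
have [Wz|Wp] : Wn c x = 0 \/ 0 < Wn c x.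
  by move: W0; rewrite le_eqVlt => /orP [/eqP <-|->]; [left|right].
  by rewrite Wz !(mulr0, mul0r).
have WCge : P x * Wn c x <= WCn c.
  rewrite /WC (bigD1 x) //= lerDl.
  by apply: sumr_ge0 => x' _; rewrite mulr_ge0 ?pjn_ge0 ?W_ge0 // => k; apply: pjn_ge0.
have WCp : 0 < WCn c by apply: lt_le_trans (mulr_gt0 Pp Wp) WCge.
have L0 : 0 < ln 2 :> R by apply: ln_gt0; lra.
rewrite /log2 ln_div ?posrE ?mulr_gt0 // !lnM ?posrE //.
by field; rewrite gt_eqF.
Qed.


Definition dec (x : Xt) := @psi _ _ _ S (phi1 S x.1) (phi2 S x.2) == x.

Lemma decE x k : dec x -> x = @Psi _ _ _ S k.1 k.2 (PhiS k x).1 (PhiS k x).2.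
Proof. by move=> /eqP dx; rewrite /PhiS /= factor dx. Qed.

Lemma injJ x x' k k' : dec x -> dec x' -> k = k' -> PhiS k x = PhiS k' x' -> x = x'.
Proof.
move=> dx dx' kk' E; by rewrite (decE x k dx) (decE x' k' dx') E kk'.
Qed.

Lemma inj12 x x' k k' : dec x -> dec x' -> x.2 = x'.2 -> k.1 = k'.1 ->
  PhiS k x = PhiS k' x' -> x = x'.
Proof.
move=> dx dx' e2 e1 E.
rewrite (decE x k dx) (decE x' k dx').
move: E; rewrite /PhiS /= => -[E1 E2].
by rewrite E1 -e1 e2.
Qed.

Lemma inj21 x x' k k' : dec x -> dec x' -> x.1 = x'.1 -> k.2 = k'.2 ->
  PhiS k x = PhiS k' x' -> x = x'.
Proof.
move=> dx dx' e1 e2 E.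
rewrite (decE x k dx) (decE x' k dx').
move: E; rewrite /PhiS /= => -[E1 E2].
by rewrite E2 -e2 e1.
Qed.


Lemma margP2 (r : X1 * X2 -> R) (x2 : sq X2 n) :
  \sum_(x1 : sq X1 n) @pjn R _ _ r n (x1, x2) = @pn R _ (marg2 r) n x2.
Proof.
rewrite /pjn /pn /marg2 /=.
transitivity (\big[GRing.mul/1]_(i < n) \big[GRing.add/0]_(a : X1) r (a, x2 i)); last by [].
by rewrite bigA_distr_bigA.
Qed.

Lemma margP1 (r : X1 * X2 -> R) (x1 : sq X1 n) :
  \sum_(x2 : sq X2 n) @pjn R _ _ r n (x1, x2) = @pn R _ (marg1 r) n x1.
Proof.
rewrite /pjn /pn /marg1 /=.
transitivity (\big[GRing.mul/1]_(i < n) \big[GRing.add/0]_(b : X2) r (x1 i, b)); last by [].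
by rewrite bigA_distr_bigA.
Qed.

Lemma marg1_ge0 (r : X1 * X2 -> R) : (forall t, 0 <= r t) -> forall a, 0 <= marg1 r a.
Proof. by move=> r0 a; apply: sumr_ge0. Qed.
Lemma marg2_ge0 (r : X1 * X2 -> R) : (forall t, 0 <= r t) -> forall a, 0 <= marg2 r a.
Proof. by move=> r0 a; apply: sumr_ge0. Qed.
Lemma marg1_sum (r : X1 * X2 -> R) : \sum_t r t = 1 -> \sum_a marg1 r a = 1.
Proof. by move=> <-; rewrite /marg1 (pair_bigA _ (fun a b => r (a, b))); apply: eq_bigr => -[]. Qed.
Lemma marg2_sum (r : X1 * X2 -> R) : \sum_t r t = 1 -> \sum_b marg2 r b = 1.
Proof.
move=> <-; rewrite /marg2 exchange_big /= (pair_bigA _ (fun a b => r (a, b))).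
by apply: eq_bigr => -[].
Qed.

Lemma Q1_fst (k1 : sq X1 n) : Q1 R Xt (sq X1 n) Q fst k1 = @pn R _ (marg1 q) n k1.
Proof.
rewrite -margP1 /Q1.
rewrite (eq_bigl (fun k : Xt => (k.1 == k1) && xpredT k.2)); last by move=> k; rewrite andbT.
rewrite -(pair_big (fun a => a == k1) xpredT (fun a b => Q (a, b))) /=.
by rewrite big_pred1_eq.
Qed.

Lemma Q1_snd (k2 : sq X2 n) : Q1 R Xt (sq X2 n) Q snd k2 = @pn R _ (marg2 q) n k2.
Proof.
rewrite -margP2 /Q1.
rewrite (eq_bigl (fun k : Xt => xpredT k.1 && (k.2 == k2))) //.
rewrite -(pair_big xpredT (fun b => b == k2) (fun a b => Q (a, b))) /=.
by apply: eq_bigr => a _; rewrite big_pred1_eq.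
Qed.

Lemma Q1_id (k : Xt) : Q1 R Xt Xt Q id k = Q k.
Proof. by rewrite /Q1 big_pred1_eq. Qed.

Lemma log2E (x : R) : log2 x = ln x / ln 2.
Proof. by []. Qed.

Lemma ent_ln (T : finType) (r : T -> R) :
  \sum_t r t * ln (r t) = - (ln 2 * entropy r).
Proof.
have L0 : ln 2 != 0 :> R by rewrite gt_eqF //; apply: ln_gt0; lra.
rewrite /entropy mulrN opprK mulr_sumr; apply: eq_bigr => t _.
by rewrite /log2; field.
Qed.

Lemma HQ_fst : \sum_k1 Q1 R Xt (sq X1 n) Q fst k1 * ln (Q1 R Xt (sq X1 n) Q fst k1)
  = - (n%:R * ln 2 * entropy (marg1 q)).
Proof.
under eq_bigr => k1 _ do rewrite Q1_fst.
rewrite (@entropy_iid R (sq X1 n) X1 n (fun y i => y i) (marg1 q)).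
- by rewrite ent_ln; ring.
- exact: iid_single.
- exact: marg1_ge0.
- exact: marg1_sum.
Qed.

Lemma HQ_snd : \sum_k2 Q1 R Xt (sq X2 n) Q snd k2 * ln (Q1 R Xt (sq X2 n) Q snd k2)
  = - (n%:R * ln 2 * entropy (marg2 q)).
Proof.
under eq_bigr => k1 _ do rewrite Q1_snd.
rewrite (@entropy_iid R (sq X2 n) X2 n (fun y i => y i) (marg2 q)).
- by rewrite ent_ln; ring.
- exact: iid_single.
- exact: marg2_ge0.
- exact: marg2_sum.
Qed.

Lemma HQ_id : \sum_k Q1 R Xt Xt Q id k * ln (Q1 R Xt Xt Q id k)
  = - (n%:R * ln 2 * entropy q).
Proof.
under eq_bigr => k _ do rewrite Q1_id.
rewrite (@entropy_iid R Xt (X1 * X2)%type n evp q).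
- by rewrite ent_ln; ring.
- exact: iid_pair.
- exact: q0.
- exact: q1.
Qed.


Lemma tb (a b H g : R) : (0 < n)%N -> 0 < a -> 0 < b ->
  `|n%:R^-1 * log2 (1 / (a / b)) - H| <= g -> n%:R * ln 2 * (H - g) <= ln b - ln a.
Proof.
move=> n0 a0 b0.
have L0 : 0 < ln 2 :> R by apply: ln_gt0; lra.
have n0R : 0 < n%:R :> R by rewrite ltr0n.
rewrite div1r invf_div /log2 ln_div ?posrE // ler_norml => /andP [h _].
set u := ln b - ln a in h *.
have h2 : H - g <= n%:R^-1 * (u / ln 2) by lra.
have := ler_wpM2l (ltW (mulr_gt0 n0R L0)) h2.
have -> : n%:R * ln 2 * (n%:R^-1 * (u / ln 2)) = u by field; rewrite !gt_eqF.
done.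
Qed.

Lemma P2_ge (x : Xt) : P x <= @pn R _ (marg2 p) n x.2.
Proof.
case: x => x1 x2; rewrite -margP2 (bigD1 x1) //= lerDl.
by apply: sumr_ge0 => y _; apply: pjn_ge0.
Qed.

Lemma P1_ge (x : Xt) : P x <= @pn R _ (marg1 p) n x.1.
Proof.
case: x => x1 x2; rewrite -margP1 (bigD1 x2) //= lerDl.
by apply: sumr_ge0 => y _; apply: pjn_ge0.
Qed.

Definition Aset (g : R) := [pred x : Xt | typical p g x && dec x && (0 < P x)].

Lemma alpha_ge (g : R) : 1 - nu p n g - perr p S <= alpha R Xt P (Aset g).
Proof.
have E : \sum_x P x = alpha R Xt P (Aset g) + \sum_(x | ~~ Aset g x) P x.
  by rewrite /alpha (bigID (Aset g)).
have B : \sum_(x | ~~ Aset g x) P x <= nu p n g + perr p S.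
  rewrite /nu /perr big_mkcond [X in _ <= X + _]big_mkcond [X in _ <= _ + X]big_mkcond.
  rewrite -big_split /=; apply: ler_sum => x _.
  have := @pjn_ge0 p p0 x; rewrite /Aset /dec /=.
  case: (typical p g x); case: (_ == x); case: (ltrP 0 (P x)) => /= h h'; lra.
move: E B; rewrite pjn_sum //; lra.
Qed.

Lemma bad_bound (r : X1 * X2 -> R) (H g : R) (f : Xt -> R) :
  (forall t, p t <= r t) -> H = mean R _ p (fun t => - log2 (p t / r t)) ->
  (forall x, 0 < P x -> f x = n%:R^-1 * log2 (1 / (P x / \prod_(i < n) r (evp x i))) - H) ->
  0 < g -> (0 < n)%N ->
  \sum_(x | ~~ (`|f x| <= g)) P x <=
    var R _ p (fun t => - log2 (p t / r t)) / (n%:R * g ^+ 2).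
Proof.
move=> pr HE fE g0 n0.
apply: (@cheb R Xt _ n evp (@iid_pair R X1 X2 n) p p1 _ f g p0 g0 n0) => y Py.
rewrite fE // (@log2_ratio R Xt _ n evp p r y p0 pr Py) HE.
by rewrite /hc mean_center.
Qed.

End Sys.


Lemma ind3 (R : realType) (a b c : bool) (v : R) : 0 <= v ->
  (if ~~ [&& a, b & c] then v else 0) <=
  (if ~~ a then v else 0) + (if ~~ b then v else 0) + (if ~~ c then v else 0).
Proof. by case: a; case: b; case: c => /= v0; lra. Qed.

Section NuB.
Variable R : realType.
Variables (X1 X2 : finType) (p : X1 * X2 -> R).
Hypotheses (p0 : forall t, 0 <= p t) (p1 : \sum_t p t = 1).

Definition g1 t := - log2 (p t / marg2 p t.2).
Definition g2 t := - log2 (p t / marg1 p t.1).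
Definition g3 t := - log2 (p t / (fun _ => 1) t).
Definition VV := var R _ p g1 + var R _ p g2 + var R _ p g3.

Lemma var_ge0 g : 0 <= var R (X1 * X2)%type p g.
Proof. by apply: sumr_ge0 => t _; rewrite mulr_ge0 // -expr2 sqr_ge0. Qed.

Lemma VV_ge0 : 0 <= VV.
Proof. by rewrite /VV !addr_ge0 // var_ge0. Qed.

Lemma nu_bound n (g : R) : 0 < g -> (0 < n)%N -> nu p n g <= VV / (n%:R * g ^+ 2).
Proof.
move=> g0 n0.
have b1 := @bad_bound R X1 X2 p n p0 p1 (fun t => marg2 p t.2) (centropy12 p) g
  (fun x => n%:R^-1 * log2 (1 / (@pjn R _ _ p n x / @pn R _ (marg2 p) n x.2)) - centropy12 p).
have b2 := @bad_bound R X1 X2 p n p0 p1 (fun t => marg1 p t.1) (centropy21 p) g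
  (fun x => n%:R^-1 * log2 (1 / (@pjn R _ _ p n x / @pn R _ (marg1 p) n x.1)) - centropy21 p).
have b3 := @bad_bound R X1 X2 p n p0 p1 (fun _ => 1) (entropy p) g
  (fun x => n%:R^-1 * log2 (1 / @pjn R _ _ p n x) - entropy p).
have c1 : forall t, p t <= marg2 p t.2.
  move=> [a b]; rewrite /marg2 (bigD1 a) //= lerDl; exact: sumr_ge0.
have c2 : forall t, p t <= marg1 p t.1.
  move=> [a b]; rewrite /marg1 (bigD1 b) //= lerDl; exact: sumr_ge0.
have c3 : forall t, p t <= 1.
  move=> t; rewrite -p1 (bigD1 t) //= lerDl; exact: sumr_ge0.
have {}b1 := b1 c1.
have {}b2 := b2 c2.
have {}b3 := b3 c3.
have e1 : centropy12 p = mean R _ p (fun t => - log2 (p t / marg2 p t.2)).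
  by rewrite /mean /centropy12 -sumrN; apply: eq_bigr => t _; rewrite mulrN.
have e2 : centropy21 p = mean R _ p (fun t => - log2 (p t / marg1 p t.1)).
  by rewrite /mean /centropy21 -sumrN; apply: eq_bigr => t _; rewrite mulrN.
have e3 : entropy p = mean R _ p (fun t => - log2 (p t / (fun _ => 1) t)).
  by rewrite /mean /entropy -sumrN; apply: eq_bigr => t _; rewrite divr1 mulrN.
have {}b1 := b1 e1 (fun x _ => erefl) g0 n0.
have {}b2 := b2 e2 (fun x _ => erefl) g0 n0.
have {}b3 := b3 e3.
have f3 : forall x, 0 < @pjn R _ _ p n x ->
   n%:R^-1 * log2 (1 / @pjn R _ _ p n x) - entropy p =
   n%:R^-1 * log2 (1 / (@pjn R _ _ p n x / \prod_(i < n) (fun _ : (X1 * X2)%type => 1 : R) (@evp X1 X2 n x i))) - entropy p.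
  by move=> x _; rewrite big1_eq divr1.
have {}b3 := b3 f3 g0 n0.
apply: (@le_trans _ _ (var R _ p g1 / (n%:R * g ^+ 2) + var R _ p g2 / (n%:R * g ^+ 2)
   + var R _ p g3 / (n%:R * g ^+ 2))); last by rewrite /VV !mulrDl.
apply: le_trans (lerD (lerD b1 b2) b3).
rewrite /nu big_mkcond [X in _ <= X + _ + _]big_mkcond [X in _ <= _ + X + _]big_mkcond.
rewrite [X in _ <= _ + X]big_mkcond -!big_split /=; apply: ler_sum => x _.
by apply: ind3; apply: prodr_ge0.
Qed.

End NuB.


Theorem proposition1 (R : realType) (X1 X2 : finFieldType)
    (p q : X1 * X2 -> R) (delta0 eps delta : R) :
  is_pmf p -> is_pmf q -> 0 < delta0 ->
  0 < eps -> eps < 1 -> 0 < delta -> delta <= delta0 ->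
  (exists R1 R2 : R, rate_region p q eps delta R1 R2) ->
  forall gamma : R, 0 < gamma -> exists n0 : nat, forall n : nat, (n0 <= n)%N ->
    [/\ centropy12 p <= entropy (marg1 q) + gamma + zeta p n gamma eps delta,
        centropy21 p <= entropy (marg2 q) + gamma + zeta p n gamma eps delta &
        entropy p <= entropy q + gamma + zeta p n gamma eps delta].
Proof.
move=> [p0 p1] [q0 q1] _ e0 e1 d0 _ [R1 [R2 [sys Hsys]]] gamma g0.
have [n1 Hn1] := Hsys 1 ltr01.
set V := VV R X1 X2 p.
have V0 : 0 <= V := VV_ge0 R X1 X2 p p0.
have ge0 : 0 < gamma ^+ 2 * (1 - eps) by rewrite mulr_gt0 ?exprn_gt0 // subr_gt0.
pose N := (Num.Def.trunc (V / (gamma ^+ 2 * (1 - eps)))).+1.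
exists (maxn (maxn n1 N) 1) => n hn.
have hn1 : (n1 <= n)%N by lia.
have hN : (N <= n)%N by lia.
have npos : (0 < n)%N by lia.
have [_ _ Hperr Hleak] := Hn1 n hn1.
set S := sys n in Hperr Hleak.
have nub : nu p n gamma <= V / (n%:R * gamma ^+ 2) := nu_bound R X1 X2 p p0 p1 n gamma g0 npos.
have n0R : 0 < n%:R :> R by rewrite ltr0n.
have Vlt : V / (n%:R * gamma ^+ 2) < 1 - eps.
  have h1 : V / (gamma ^+ 2 * (1 - eps)) < n%:R.
    apply: lt_le_trans (truncnS_gt _) _; rewrite ler_nat; exact: hN.
  move: h1; rewrite ltr_pdivrMr // => h1.
  rewrite ltr_pdivrMr ?mulr_gt0 ?exprn_gt0 //.
  by apply: lt_le_trans h1 _; rewrite le_eqVlt; apply/orP; left; apply/eqP; ring.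
set b := 1 - nu_eps p n gamma eps.
have b0 : 0 < b by rewrite /b /nu_eps; lra.
have ba : b <= alpha R _ (@pjn R _ _ p n) (Aset R X1 X2 p n S gamma).
  apply: le_trans (alpha_ge R X1 X2 p n S p0 p1 gamma); rewrite /b /nu_eps; lra.
have L0 : 0 < ln 2 :> R by apply: ln_gt0; lra.
have HD : \sum_x @pjn R _ _ p n x * Dx R _ _ _ (@pjn R _ _ p n) (@pjn R _ _ q n) (PhiS X1 X2 n S) x
    <= ln 2 * delta.
  by rewrite -(leak R X1 X2 p q n S p0 q0 q1) ler_wpM2l // ltW.
have P0 := @pjn_ge0 R X1 X2 n p p0.
have P1 := @pjn_sum R X1 X2 n p p1.
have Q0 := @pjn_ge0 R X1 X2 n q q0.
have Q1s := @pjn_sum R X1 X2 n q q1.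
have PA : forall x, Aset R X1 X2 p n S gamma x -> 0 < @pjn R _ _ p n x.
  by move=> x /andP [_ ->].
have d0' : 0 <= delta by apply: ltW.
split.
- apply: (@case_bound R _ _ _ (sq X2 n) (sq X1 n) _ _ (PhiS X1 X2 n S) snd fst
     (@pn R _ (marg2 p) n) (Aset R X1 X2 p n S gamma) P0 P1 Q0 Q1s _ _ PA _ _ n
     (centropy12 p) (entropy (marg1 q)) gamma delta b npos (HQ_fst R X1 X2 q n q0 q1) _ HD d0' b0 ba).
  + by move=> s; apply: prodr_ge0 => i _; apply: marg2_ge0.
  + rewrite le_eqVlt; apply/orP; left; apply/eqP.
    exact (@sum_Pr R (sq X2 n) X2 n (fun (y : sq X2 n) i => y i) (marg2 p) (@iid_single R X2 n)
              (marg2_sum R X1 X2 p p1)).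
  + by move=> x Ax; apply: lt_le_trans (PA x Ax) (P2_ge R X1 X2 p n p0 x).
  + move=> x x' k k' /andP [/andP [_ dx] _] /andP [/andP [_ dx'] _] e2 e1'.
    exact: (inj12 X1 X2 n S x x' k k' dx dx' e2 e1').
  + move=> x /andP [/andP [tx _] Px].
    apply: tb => //; first by apply: lt_le_trans Px (P2_ge R X1 X2 p n p0 x).
    by case/and3P: tx.
- apply: (@case_bound R _ _ _ (sq X1 n) (sq X2 n) _ _ (PhiS X1 X2 n S) fst snd
     (@pn R _ (marg1 p) n) (Aset R X1 X2 p n S gamma) P0 P1 Q0 Q1s _ _ PA _ _ n
     (centropy21 p) (entropy (marg2 q)) gamma delta b npos (HQ_snd R X1 X2 q n q0 q1) _ HD d0' b0 ba).
  + by move=> s; apply: prodr_ge0 => i _; apply: marg1_ge0.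
  + rewrite le_eqVlt; apply/orP; left; apply/eqP.
    exact (@sum_Pr R (sq X1 n) X1 n (fun (y : sq X1 n) i => y i) (marg1 p) (@iid_single R X1 n)
              (marg1_sum R X1 X2 p p1)).
  + by move=> x Ax; apply: lt_le_trans (PA x Ax) (P1_ge R X1 X2 p n p0 x).
  + move=> x x' k k' /andP [/andP [_ dx] _] /andP [/andP [_ dx'] _] e2 e1'.
    exact: (inj21 X1 X2 n S x x' k k' dx dx' e2 e1').
  + move=> x /andP [/andP [tx _] Px].
    apply: tb => //; first by apply: lt_le_trans Px (P1_ge R X1 X2 p n p0 x).
    by case/and3P: tx.
- apply: (@case_bound R _ _ _ unit _ _ _ (PhiS X1 X2 n S) (fun _ => tt) id
     (fun _ => 1) (Aset R X1 X2 p n S gamma) P0 P1 Q0 Q1s _ _ PA _ _ n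
     (entropy p) (entropy q) gamma delta b npos (HQ_id R X1 X2 q n q0 q1) _ HD d0' b0 ba).
  + by move=> s; apply: ler01.
  + by rewrite big_const card_unit /= addr0.
  + by move=> x _; apply: ltr01.
  + move=> x x' k k' /andP [/andP [_ dx] _] /andP [/andP [_ dx'] _] _ e1'.
    exact: (injJ X1 X2 n S x x' k k' dx dx' e1').
  + move=> x /andP [/andP [tx _] Px].
    rewrite ln1.
    have := @tb R n (@pjn R _ _ p n x) 1 (entropy p) gamma npos Px ltr01.
    rewrite divr1 ln1; apply.
    by case/and3P: tx.
Qed.
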